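(* Let $p\ge 1$, let $k_i,k_j>0$ be real numbers, and let $A,B$ be real symmetric $p\times p$ matrices. Consider the optimization problem \[ \max_{Y\in\mathbb{S}_+^p}\; k_i\log\det\Big(A-\tfrac{1}{k_i}Y\Big)+k_j\log\det\Big(B+\tfrac{1}{k_j}Y\Big)\quad\text{subject to}\quad -k_jB\prec Y\prec k_iA . \] Suppose this problem is feasible, i.e. there exists $Y\in\mathbb{S}_+^p$ with $-k_jB\prec Y\prec k_iA$. Then $A\succ O$, and an optimal solution of the problem is \[ Y^\ast=\frac{k_ik_j}{k_i+k_j}\,A^{1/2}\,\mathrm{proj}_{\mathbb{S}_+^p}\Big(I-A^{-1/2}BA^{-1/2}\Big)\,A^{1/2}. \]
   Context: $\mathbb{S}_+^p$ denotes the set of real symmetric positive semi-definite $p\times p$ matrices. For symmetric matrices $X,Y$, $X\preceq Y$ means $Y-X$ is positive semi-definite and $X\prec Y$ means $Y-X$ is positive definite; $O$ is the zero matrix and $I$ the identity. $A^{1/2}$ is the symmetric positive definite square root and $A^{-1/2}$ its inverse. $\mathrm{proj}_{\mathbb{S}_+^p}$ is the Frobenius-norm orthogonal projection onto $\mathbb{S}_+^p$ (for a symmetric matrix with eigen-decomposition $U\mathrm{diag}(\lambda)U^{\mathsf T}$ it equals $U\mathrm{diag}(\max(\lambda,0))U^{\mathsf T}$). *)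

(* Defs.v *)
From HB Require Import structures.
From mathcomp Require Import all_boot all_order all_algebra.
From mathcomp Require Import classical_sets boolp reals exp.
Set Implicit Arguments. Unset Strict Implicit. Unset Printing Implicit Defensive.
Import Order.TTheory GRing.Theory Num.Theory.
Local Open Scope ring_scope.
Local Open Scope classical_set_scope.

Section Defs.
Variable R : realType.
Variable p : nat.

Definition sym_mx (M : 'M[R]_p) : Prop := M^T = M.

Definition qform (M : 'M[R]_p) (x : 'cV[R]_p) : R := (x^T *m M *m x) 0 0.

Definition psd (M : 'M[R]_p) : Prop :=
  sym_mx M /\ forall x : 'cV[R]_p, 0 <= qform M x.

Definition pd (M : 'M[R]_p) : Prop :=
  sym_mx M /\ forall x : 'cV[R]_p, x != 0 -> 0 < qform M x.

Definition loewner_le (X Y : 'M[R]_p) : Prop := psd (Y - X).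
Definition loewner_lt (X Y : 'M[R]_p) : Prop := pd (Y - X).

(* A^{1/2}: the (unique) sym_mx positive definite square root of A
   (junk value 0 if A is not positive definite). *)
Definition msqrt (A : 'M[R]_p) : 'M[R]_p :=
  xget 0 [set S : 'M[R]_p | pd S /\ S *m S = A].

Definition minvsqrt (A : 'M[R]_p) : 'M[R]_p := invmx (msqrt A).

Definition frob2 (X Y : 'M[R]_p) : R :=
  \sum_(i < p) \sum_(j < p) (X i j - Y i j) ^+ 2.

Definition proj_psd (X : 'M[R]_p) : 'M[R]_p :=
  xget 0 [set P : 'M[R]_p | psd P /\ forall Q : 'M[R]_p, psd Q -> frob2 X P <= frob2 X Q].

Definition logdet (M : 'M[R]_p) : R := ln (\det M).

Definition objective (ki kj : R) (A B Y : 'M[R]_p) : R :=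
  ki * logdet (A - ki^-1 *: Y) + kj * logdet (B + kj^-1 *: Y).

Definition feasible (ki kj : R) (A B Y : 'M[R]_p) : Prop :=
  psd Y /\ loewner_lt (- (kj *: B)) Y /\ loewner_lt Y (ki *: A).

End Defs.

(* Main.v *)
Require Import Defs.
From HB Require Import structures.
From mathcomp Require Import all_boot all_order all_algebra.
From mathcomp Require Import classical_sets boolp reals exp.
From mathcomp Require Import topology normedtype derive.
From mathcomp Require Import ring lra.
Import Order.TTheory GRing.Theory Num.Theory.
Import numFieldTopology.Exports numFieldNormedType.Exports.
Set Implicit Arguments. Unset Strict Implicit. Unset Printing Implicit Defensive.
Local Open Scope ring_scope.
Local Open Scope classical_set_scope.
Section Lin.
Variable R : realType.

Lemma cont_sum (T : topologicalType) m (P : pred 'I_m) (F : 'I_m -> T -> R) :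
  (forall i, continuous (F i)) -> continuous (fun x => \sum_(i < m | P i) F i x).
Proof. by move=> Fc; apply: continuous_big => //; exact: add_continuous. Qed.

Lemma cont_mul (T : topologicalType) (f g : T -> R) :
  continuous f -> continuous g -> continuous (fun x => f x * g x).
Proof. by move=> fc gc x; apply: cvgM; [exact: fc|exact: gc]. Qed.

Lemma cont_coord n (i : 'I_n) : continuous (fun x : 'rV[R]_n => x 0 i).
Proof. exact: coord_continuous. Qed.

Definition dotr n (x y : 'rV[R]_n) : R := \sum_j x 0 j * y 0 j.

Lemma dotrC n (x y : 'rV[R]_n) : dotr x y = dotr y x.
Proof. by apply: eq_bigr => j _; rewrite mulrC. Qed.

Lemma dotrDl n (x y z : 'rV[R]_n) : dotr (x + y) z = dotr x z + dotr y z.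
Proof. by rewrite /dotr -big_split; apply: eq_bigr => j _; rewrite mxE mulrDl. Qed.

Lemma dotrZl n a (x z : 'rV[R]_n) : dotr (a *: x) z = a * dotr x z.
Proof. by rewrite /dotr mulr_sumr; apply: eq_bigr => j _; rewrite mxE mulrA. Qed.

Lemma dotrBl n (x y z : 'rV[R]_n) : dotr (x - y) z = dotr x z - dotr y z.
Proof. by rewrite dotrDl -scaleN1r dotrZl mulN1r. Qed.

Lemma dotrDr n (x y z : 'rV[R]_n) : dotr z (x + y) = dotr z x + dotr z y.
Proof. by rewrite !(dotrC z) dotrDl. Qed.

Lemma dotrZr n a (x z : 'rV[R]_n) : dotr z (a *: x) = a * dotr z x.
Proof. by rewrite !(dotrC z) dotrZl. Qed.

Lemma dotrBr n (x y z : 'rV[R]_n) : dotr z (x - y) = dotr z x - dotr z y.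
Proof. by rewrite !(dotrC z) dotrBl. Qed.

Lemma dotr0l n (z : 'rV[R]_n) : dotr 0 z = 0.
Proof. by rewrite /dotr big1 // => j _; rewrite mxE mul0r. Qed.

Lemma dotr_ge0 n (x : 'rV[R]_n) : 0 <= dotr x x.
Proof. by apply: sumr_ge0 => j _; rewrite -expr2 sqr_ge0. Qed.

Lemma dotr_eq0 n (x : 'rV[R]_n) : dotr x x = 0 -> x = 0.
Proof.
move=> h; apply/rowP => j; rewrite mxE.
have := @psumr_eq0P _ _ xpredT (fun j => x 0 j * x 0 j).
move=> /(_ (fun j _ => ltac:(by rewrite -expr2 sqr_ge0)) h j isT).
by move/eqP; rewrite mulf_eq0 orbb => /eqP.
Qed.

Lemma dotrE n (x y : 'rV[R]_n) : (x *m y^T) 0 0 = dotr x y.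
Proof. by rewrite mxE; apply: eq_bigr => j _; rewrite mxE. Qed.

Lemma dotr_sym n (A : 'M[R]_n) (x y : 'rV[R]_n) : A^T = A ->
  dotr (x *m A) y = dotr x (y *m A).
Proof.
move=> sA; rewrite /dotr.
rewrite (eq_bigr (fun j => \sum_k x 0 k * A k j * y 0 j)); last first.
  by move=> j _; rewrite mxE mulr_suml.
rewrite exchange_big /=; apply: eq_bigr => k _.
rewrite mxE mulr_sumr; apply: eq_bigr => j _.
have -> : A j k = A k j by rewrite -[in LHS]sA mxE.
by ring.
Qed.

End Lin.
Section Step.
Variable R : realType.

Lemma quad_zero (a b : R) : 0 <= a -> (forall t, 0 <= 2 * t * b + t ^+ 2 * a) -> b = 0.
Proof.
move=> a0 h; have := h (- b / (a + 1)).
have a1 : 0 < a + 1 by lra.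
set t := - b / (a + 1).
have -> : 2 * t * b + t ^+ 2 * a = - (b ^+ 2) * (a + 2) / (a + 1) ^+ 2.
  rewrite /t; field; lra.
rewrite pmulr_lge0 ?invr_gt0 ?exprn_gt0 //.
move=> hb; have : b ^+ 2 * (a + 2) <= 0 by rewrite mulNr oppr_ge0 in hb.
have : 0 <= b ^+ 2 := sqr_ge0 b.
move=> hb2 hb3; have : b ^+ 2 = 0 by nra.
by move/eqP; rewrite sqrf_eq0 => /eqP.
Qed.

Variable n : nat.
Variable A : 'M[R]_n.
Hypothesis symA : A^T = A.

Let q (x : 'rV[R]_n) := dotr (x *m A) x.

Lemma q_cont : continuous q.
Proof.
rewrite /q /dotr; apply: cont_sum => j; apply: cont_mul; last exact: cont_coord.
have -> : (fun x : 'rV[R]_n => (x *m A) 0 j) = (fun x => \sum_k x 0 k * A k j).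
  by apply/funext => x; rewrite mxE.
apply: cont_sum => k; apply: cont_mul; first exact: cont_coord.
exact: cst_continuous.
Qed.

Lemma dot_cont (y : 'rV[R]_n) : continuous (fun x : 'rV[R]_n => dotr x y).
Proof.
apply: cont_sum => j; apply: cont_mul; first exact: cont_coord.
exact: cst_continuous.
Qed.

Lemma dotself_cont : continuous (fun x : 'rV[R]_n => dotr x x).
Proof. by apply: cont_sum => j; apply: cont_mul; exact: cont_coord. Qed.

End Step.
Section Step2.
Variable R : realType.
Variable n : nat.
Variable A : 'M[R]_n.
Hypothesis symA : A^T = A.

Lemma kernel_vec (k : nat) (kn : (k < n)%N) (v : 'I_n -> 'rV[R]_n) :
  exists x : 'rV[R]_n, x != 0 /\ forall i : 'I_n, (i < k)%N -> dotr x (v i) = 0.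
Proof.
pose V := \matrix_(i < n, j < n) (if (i < k)%N then v i 0 j else 0) : 'M[R]_n.
have rV : (\rank V <= k)%N.
  have -> : V = pid_mx k *m V.
    apply/matrixP => i j; rewrite [RHS]mxE (bigD1 i) //= big1; last first.
      move=> l li; rewrite mxE; case: eqP => [/ord_inj il|]; last by rewrite mul0r.
      by rewrite il eqxx in li.
    rewrite !mxE eqxx /= addr0; case: ifP => ik; first by rewrite mul1r.
    by rewrite mul0r.
  apply: leq_trans (mxrankM_maxl _ _) _.
  by rewrite rank_pid_mx // ltnW.
have : (0 < \rank (kermx V^T))%N.
  by rewrite mxrank_ker mxrank_tr subn_gt0; apply: leq_ltn_trans rV kn.
rewrite lt0n mxrank_eq0 => /eqP K0.
have [i Hi] : exists i, row i (kermx V^T) != 0.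
  apply/existsP; apply: contraT; rewrite negb_exists => /forallP h.
  exfalso; apply: K0; apply/row_matrixP => l; rewrite row0; apply/eqP.
  by move: (h l); rewrite negbK.
exists (row i (kermx V^T)); split => // j jk.
have /matrixP/(_ i j) := mulmx_ker V^T.
rewrite !mxE /= => <-.
by apply: eq_bigr => l _; rewrite !mxE jk.
Qed.
End Step2.
Section Step3.
Variable R : realType.
Variable n : nat.
Variable A : 'M[R]_n.
Hypothesis symA : A^T = A.

Lemma dotr_gt0 (x : 'rV[R]_n) : x != 0 -> 0 < dotr x x.
Proof.
move=> x0; rewrite lt_neqAle dotr_ge0 andbT eq_sym.
by apply: contra x0 => /eqP/dotr_eq0 ->.
Qed.

Lemma eig_step (k : nat) (kn : (k < n)%N) (v : 'I_n -> 'rV[R]_n) (mu : 'I_n -> R) :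
  (forall i : 'I_n, (i < k)%N -> v i *m A = mu i *: v i) ->
  exists c : 'rV[R]_n, exists l : R, dotr c c = 1 /\
    (forall i : 'I_n, (i < k)%N -> dotr c (v i) = 0) /\ c *m A = l *: c.
Proof.
move=> ev.
pose q x := dotr (x *m A) x.
pose inW x := forall i : 'I_n, (i < k)%N -> dotr x (v i) = 0.
pose g x := \sum_(i < n | (i < k)%N) dotr x (v i) ^+ 2.
pose K := [set x : 'rV[R]_n | dotr x x = 1 /\ g x = 0].
have gW x : g x = 0 -> inW x.
  move=> gx i ik.
  have := @psumr_eq0P _ _ (fun i : 'I_n => (i < k)%N) (fun i => dotr x (v i) ^+ 2)
     (fun i _ => sqr_ge0 _) gx i ik.
  by move/eqP; rewrite sqrf_eq0 => /eqP.
have Wg x : inW x -> g x = 0.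
  by move=> hx; rewrite /g big1 // => i ik; rewrite hx // expr0n.
have norm x : x != 0 -> inW x -> K ((Num.sqrt (dotr x x))^-1 *: x).
  move=> x0 hx; have dp := dotr_gt0 x0.
  split.
    rewrite dotrZl dotrZr mulrA -expr2 exprVn sqr_sqrtr ?mulVf //.
      by rewrite gt_eqF.
    exact: ltW.
  by apply: Wg => i ik; rewrite dotrZl hx // mulr0.
have [x0 [x0n x0W]] := kernel_vec kn v.
have K0 : K !=set0 by exists ((Num.sqrt (dotr x0 x0))^-1 *: x0); exact: norm.
have Kc : compact K.
  have Bc := rV_compact (fun _ : 'I_n => @segment_compact R (-1) 1).
  apply: (subclosed_compact _ Bc).
    change (closed ((fun x => dotr x x) @^-1` [set 1] `&` g @^-1` [set 0])).
    apply: closedI; apply: preimage_closed; try exact: closed_eq.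
      by move=> x _; exact: dotself_cont.
    move=> x _; apply: cont_sum => i.
    have -> : (fun x => dotr x (v i) ^+ 2) = (fun x => dotr x (v i) * dotr x (v i)).
      by apply/funext => y; rewrite expr2.
    by apply: cont_mul; exact: dot_cont.
  move=> x [x1 _] i /=; rewrite in_itv /=.
  have : x 0 i ^+ 2 <= 1.
    rewrite -x1 /dotr (bigD1 i) //= -expr2 lerDl.
    by apply: sumr_ge0 => j _; rewrite -expr2 sqr_ge0.
  by move=> h; apply/andP; split; nra.
have qc : continuous q := @q_cont R n A.
have [c cK cmax] := EVT_max_rV K0 Kc (continuous_subspaceT qc).
have [c1 cg] : K c := set_mem cK.
have cW := gW _ cg.
set l := q c.
have bound z : inW z -> q z <= l * dotr z z.
  move=> hz; have [->|z0] := eqVneq z 0.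
    by rewrite /q mul0mx !dotr0l mulr0.
  have := cmax _ (mem_set (norm z z0 hz)); rewrite /q -scalemxAl dotrZl dotrZr.
  set s := Num.sqrt (dotr z z).
  have s2 : s ^+ 2 = dotr z z by rewrite sqr_sqrtr // dotr_ge0.
  have sp : 0 < s by rewrite sqrtr_gt0 dotr_gt0.
  move=> h; rewrite -s2.
  have -> : dotr (z *m A) z = s ^+ 2 * (s^-1 * (s^-1 * dotr (z *m A) z)).
    by field; rewrite gt_eqF.
  by rewrite [_ * s ^+ 2]mulrC ler_wpM2l // exprn_ge0 // ltW.
pose Q x := l * dotr x x - q x.
have QW x : inW x -> 0 <= Q x by move=> hx; rewrite /Q subr_ge0 bound.
have Bz z : inW z -> l * dotr c z - dotr (c *m A) z = 0.
  move=> hz; apply: (@quad_zero _ (Q z)); first exact: QW.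
  move=> t; have : inW (c + t *: z).
    by move=> i ik; rewrite dotrDl dotrZl cW // hz // mulr0 addr0.
  move/QW; rewrite /Q /q mulmxDl -scalemxAl !dotrDl !dotrDr !dotrZl !dotrZr.
  rewrite (dotrC z c) (dotr_sym z c symA) (dotrC z (c *m A)) c1.
  have -> : dotr (c *m A) c = l by [].
  move=> h; apply: (le_trans h); rewrite le_eqVlt; apply/orP; left; apply/eqP; ring.
pose w := l *: c - c *m A.
have wW : inW w.
  move=> i ik; rewrite /w dotrBl dotrZl cW // mulr0 sub0r dotr_sym //.
  by rewrite ev // dotrZr cW // mulr0 oppr0.
have ww : dotr w w = 0.
  rewrite -(Bz _ wW) /w dotrBl dotrZl //.
have w0 := dotr_eq0 ww.
exists c, l; split => //; split => //.
by apply/eqP; rewrite eq_sym -subr_eq0; apply/eqP.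
Qed.

Lemma eig_family k : (k <= n)%N -> exists (v : 'I_n -> 'rV[R]_n) (mu : 'I_n -> R),
  (forall i j : 'I_n, (i < k)%N -> (j < k)%N -> dotr (v i) (v j) = (i == j)%:R) /\
  (forall i : 'I_n, (i < k)%N -> v i *m A = mu i *: v i).
Proof.
elim: k => [_|k IH kn].
  by exists (fun _ => 0), (fun _ => 0); split.
have [v [mu [vo ve]]] := IH (ltnW kn).
have [c [l [c1 [cv ce]]]] := eig_step kn ve.
exists (fun i : 'I_n => if (i == k :> nat) then c else v i).
exists (fun i : 'I_n => if (i == k :> nat) then l else mu i).
have lt_k (i : 'I_n) : (i < k.+1)%N -> (i == k :> nat) = false -> (i < k)%N.
  by rewrite ltnS leq_eqVlt => /orP[/eqP->|//]; rewrite eqxx.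
split.
  move=> i j ik jk; case: eqP => [ieq|/eqP/negPf ine]; case: eqP => [jeq|/eqP/negPf jne].
  - have -> : i = j by apply: ord_inj; rewrite ieq jeq.
    by rewrite c1 eqxx.
  - rewrite cv ?lt_k //; case: eqP => // ij; by rewrite -ij ieq eqxx in jne.
  - rewrite dotrC cv ?lt_k //; case: eqP => // ij; by rewrite ij jeq eqxx in ine.
  - by rewrite vo ?lt_k.
move=> i ik; case: eqP => // /eqP/negPf ine; exact: ve (lt_k _ ik ine).
Qed.

Theorem spectral : exists U : 'M[R]_n, exists d : 'rV[R]_n,
  U *m U^T = 1%:M /\ A = U^T *m diag_mx d *m U.
Proof.
have [v [mu [vo ve]]] := eig_family (leqnn n).
pose U := \matrix_(i < n, j < n) v i 0 j.
exists U, (\row_i mu i).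
have UU : U *m U^T = 1%:M.
  apply/matrixP => i j; rewrite !mxE -vo //.
  by apply: eq_bigr => l _; rewrite !mxE.
split => //.
have UA : U *m A = diag_mx (\row_i mu i) *m U.
  apply/matrixP => i j; rewrite mul_diag_mx !mxE.
  have := congr1 (fun M : 'rV[R]_n => M 0 j) (ve i (ltn_ord i)).
  rewrite !mxE => <-; apply: eq_bigr => l _; by rewrite mxE.
have UtU : U^T *m U = 1%:M by apply: mulmx1C.
by rewrite -mulmxA -UA mulmxA UtU mul1mx.
Qed.
End Step3.
Section Mat.
Variable R : realType.
Variable p : nat.
Implicit Types (U M : 'M[R]_p) (d : 'rV[R]_p) (x : 'cV[R]_p).

Definition sp (U : 'M[R]_p) (d : 'rV[R]_p) := U^T *m diag_mx d *m U.
Definition orth (U : 'M[R]_p) := U *m U^T = 1%:M.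

Lemma orthT U : orth U -> U^T *m U = 1%:M.
Proof. exact: mulmx1C. Qed.

Lemma qform_sp U d x : qform (sp U d) x = \sum_i d 0 i * (U *m x) i 0 ^+ 2.
Proof.
rewrite /qform /sp.
have -> : x^T *m (U^T *m diag_mx d *m U) *m x = (U *m x)^T *m diag_mx d *m (U *m x).
  by rewrite trmx_mul !mulmxA.
rewrite mxE; apply: eq_bigr => i _; rewrite mul_mx_diag !mxE; ring.
Qed.

Lemma sp_sym U d : sym_mx (sp U d).
Proof. by rewrite /sym_mx /sp !trmx_mul tr_diag_mx trmxK mulmxA. Qed.

Lemma Ux_neq0 U (x : 'cV[R]_p) : orth U -> x != 0 -> U *m x != 0.
Proof.
move=> oU; apply: contra => /eqP Ux0; apply/eqP.
by rewrite -[x]mul1mx -(orthT oU) -mulmxA Ux0 mulmx0.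
Qed.

Lemma sp_psd U d : orth U -> (forall i, 0 <= d 0 i) -> psd (sp U d).
Proof.
move=> oU d0; split; first exact: sp_sym.
by move=> x; rewrite qform_sp; apply: sumr_ge0 => i _; rewrite mulr_ge0 ?sqr_ge0.
Qed.

Lemma sp_pd U d : orth U -> (forall i, 0 < d 0 i) -> pd (sp U d).
Proof.
move=> oU d0; split; first exact: sp_sym.
move=> x x0; rewrite qform_sp.
have ge0 : forall i : 'I_p, true -> 0 <= d 0 i * (U *m x) i 0 ^+ 2.
  by move=> i _; rewrite mulr_ge0 ?sqr_ge0 ?ltW.
rewrite lt_neqAle sumr_ge0 // andbT eq_sym; apply/negP => /eqP h.
have := Ux_neq0 oU x0; apply/negP/negPn/eqP/matrixP => i j.
rewrite [j]ord1 [RHS]mxE; have := @psumr_eq0P _ _ _ _ ge0 h i isT.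
by move/eqP; rewrite mulf_eq0 (gt_eqF (d0 i)) sqrf_eq0 /= => /eqP.
Qed.
End Mat.
Section Mat2.
Variable R : realType.
Variable p : nat.
Implicit Types (U M : 'M[R]_p) (d : 'rV[R]_p) (x : 'cV[R]_p).

Lemma U_rowT U i : orth U -> U *m (row i U)^T = (row i 1%:M)^T.
Proof. by move=> oU; rewrite -[U in U *m _]trmxK -trmx_mul -row_mul oU. Qed.

Lemma sp_eig U d i : orth U -> qform (sp U d) (row i U)^T = d 0 i.
Proof.
move=> oU; rewrite qform_sp U_rowT // (bigD1 i) //= big1.
  by rewrite !mxE eqxx expr1n mulr1 addr0.
by move=> j ji; rewrite !mxE eq_sym (negPf ji) expr0n /= mulr0.
Qed.

Lemma row_neq0 U i : orth U -> (row i U)^T != 0.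
Proof.
move=> oU; apply/eqP => h.
have := U_rowT i oU; rewrite h mulmx0 => /matrixP/(_ i 0).
by rewrite !mxE eqxx => /eqP; rewrite eq_sym oner_eq0.
Qed.

Lemma psd_eig M U d : orth U -> M = sp U d -> psd M -> forall i, 0 <= d 0 i.
Proof. by move=> oU -> [_ h] i; rewrite -(sp_eig d i oU). Qed.

Lemma pd_eig M U d : orth U -> M = sp U d -> pd M -> forall i, 0 < d 0 i.
Proof. by move=> oU -> [_ h] i; rewrite -(sp_eig d i oU) h // row_neq0. Qed.

Lemma spectral_sym M : sym_mx M -> exists U d, orth U /\ M = sp U d.
Proof. by move=> sM; have [U [d [oU ->]]] := spectral sM; exists U, d. Qed.

Lemma det_sp U d : orth U -> \det (sp U d) = \prod_i d 0 i.
Proof.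
move=> oU; rewrite /sp !det_mulmx det_diag det_tr.
have : \det U * \det U = 1 by rewrite -{1}det_tr -det_mulmx orthT // det1.
move=> h; rewrite mulrC mulrA h mul1r //.
Qed.

Lemma tr_sp U d : orth U -> \tr (sp U d) = \sum_i d 0 i.
Proof.
move=> oU; rewrite /sp mxtrace_mulC mulmxA oU mul1mx mxtrace_diag.
by apply: eq_bigr => i _.
Qed.

Lemma pd_det_gt0 M : pd M -> 0 < \det M.
Proof.
move=> pM; have [U [d [oU eM]]] := spectral_sym pM.1.
rewrite eM det_sp //; apply: prodr_gt0 => i _; exact: pd_eig eM pM i.
Qed.

Lemma pd_unit M : pd M -> M \in unitmx.
Proof. by move=> pM; rewrite unitmxE unitfE gt_eqF // pd_det_gt0. Qed.

Lemma pd_sqrt M : pd M -> exists S, pd S /\ S *m S = M.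
Proof.
move=> pM; have [U [d [oU eM]]] := spectral_sym pM.1.
have d0 := pd_eig oU eM pM.
exists (sp U (\row_i Num.sqrt (d 0 i))); split.
  by apply: sp_pd => // i; rewrite mxE sqrtr_gt0.
rewrite eM /sp !mulmxA -[_ *m U *m U^T]mulmxA oU mulmx1.
rewrite -[U^T *m _ *m _]mulmxA mulmx_diag.
congr (_ *m diag_mx _ *m _); apply/rowP => i; rewrite !mxE -expr2 sqr_sqrtr //.
exact: ltW.
Qed.

Lemma msqrt_spec M : pd M -> pd (msqrt M) /\ msqrt M *m msqrt M = M.
Proof. by move=> pM; rewrite /msqrt; apply: (xgetPex 0 (pd_sqrt pM)). Qed.

End Mat2.
Section Mat3.
Variable R : realType.
Variable p : nat.
Implicit Types (U M N K Z X Y : 'M[R]_p) (d e : 'rV[R]_p) (x : 'cV[R]_p).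

Definition ip M N := \sum_i \sum_j M i j * N i j.

Lemma ip_tr M N : ip M N = \tr (M^T *m N).
Proof.
rewrite /ip /mxtrace exchange_big /=; apply: eq_bigr => i _.
by rewrite mxE; apply: eq_bigr => j _; rewrite mxE.
Qed.

Lemma ipC M N : ip M N = ip N M.
Proof. by apply: eq_bigr => i _; apply: eq_bigr => j _; rewrite mulrC. Qed.

Lemma ipDl M N K : ip (M + N) K = ip M K + ip N K.
Proof.
rewrite /ip -big_split; apply: eq_bigr => i _.
by rewrite -big_split; apply: eq_bigr => j _; rewrite mxE mulrDl.
Qed.

Lemma ipZl a M K : ip (a *: M) K = a * ip M K.
Proof.
rewrite /ip mulr_sumr; apply: eq_bigr => i _.
by rewrite mulr_sumr; apply: eq_bigr => j _; rewrite mxE mulrA.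
Qed.

Lemma ipNl M K : ip (- M) K = - ip M K.
Proof. by rewrite -scaleN1r ipZl mulN1r. Qed.

Lemma ipBl M N K : ip (M - N) K = ip M K - ip N K.
Proof. by rewrite ipDl ipNl. Qed.

Lemma frob2_ip X Y : frob2 X Y = ip (X - Y) (X - Y).
Proof.
rewrite /frob2 /ip; apply: eq_bigr => i _; apply: eq_bigr => j _.
by rewrite !mxE expr2.
Qed.

Lemma ip_qform M x : ip M (x *m x^T) = qform M x.
Proof.
rewrite /ip /qform mxE exchange_big /=; apply: eq_bigr => j _.
rewrite mxE mulr_suml; apply: eq_bigr => i _.
by rewrite !mxE big_ord1 !mxE; ring.
Qed.

Lemma qform_row M (z : 'rV[R]_p) : qform M z^T = dotr (z *m M) z.
Proof. by rewrite /qform trmxK -dotrE. Qed.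

Lemma psd_zero M x : psd M -> qform M x = 0 -> M *m x = 0.
Proof.
move=> [sM pM] qx.
pose c := x^T.
have qc : dotr (c *m M) c = 0 by rewrite -qform_row trmxK.
have B z : dotr (c *m M) z = 0.
  apply: (@quad_zero _ (dotr (z *m M) z)); first by rewrite -qform_row.
  move=> t; have := pM (c + t *: z)^T; rewrite qform_row.
  rewrite mulmxDl -scalemxAl !dotrDl !dotrDr !dotrZl !dotrZr qc.
  rewrite (dotr_sym z c sM) (dotrC z (c *m M)).
  move=> h; apply: (le_trans h); rewrite le_eqVlt; apply/orP; left; apply/eqP.
  ring.
have := B (c *m M); move/dotr_eq0 => cM.
by rewrite -[M]sM -[x]trmxK -trmx_mul cM trmx0.
Qed.

Lemma tr_sp_mul U e Z : orth U ->
  \tr (sp U e *m Z) = \sum_i e 0 i * qform Z (row i U)^T.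
Proof.
move=> oU; rewrite /sp -!mulmxA mxtrace_mulC /mxtrace.
apply: eq_bigr => i _; rewrite !mulmxA mul_diag_mx mxE.
rewrite /qform trmxK mxE mulr_sumr; apply: eq_bigr => j _.
rewrite !mxE !mulr_suml mulr_sumr; apply: eq_bigr => k _; rewrite !mxE; ring.
Qed.

Lemma tr_psd_ge0 K Z : psd K -> psd Z -> 0 <= \tr (K *m Z).
Proof.
move=> pK pZ; have [U [e [oU eK]]] := spectral_sym pK.1.
rewrite eK tr_sp_mul //; apply: sumr_ge0 => i _.
by rewrite mulr_ge0 //; [exact: psd_eig eK pK i | exact: pZ.2].
Qed.

Lemma tr_psd_eq0 K Z : psd K -> psd Z -> \tr (K *m Z) = 0 -> K *m Z = 0.
Proof.
move=> pK pZ; have [U [e [oU eK]]] := spectral_sym pK.1.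
rewrite eK tr_sp_mul // => h.
have ge0 : forall i : 'I_p, true -> 0 <= e 0 i * qform Z (row i U)^T.
  by move=> i _; rewrite mulr_ge0 //; [exact: psd_eig eK pK i | exact: pZ.2].
suff : diag_mx e *m (U *m Z) = 0 by rewrite /sp -!mulmxA => ->; rewrite mulmx0.
apply/matrixP => i j; rewrite mul_diag_mx !mxE.
have := @psumr_eq0P _ _ _ _ ge0 h i isT; move/eqP; rewrite mulf_eq0.
case/orP => [/eqP->|/eqP qz]; first by rewrite mul0r.
have Zu := psd_zero pZ qz.
have : (row i U *m Z) 0 j = 0.
  by rewrite -[Z]pZ.1 -[row i U]trmxK -trmx_mul Zu !mxE.
rewrite -row_mul mxE => h0.
have e1 : \sum_k U i k * Z k j = (U *m Z) i j by rewrite mxE.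
by rewrite e1 h0 mulr0.
Qed.

End Mat3.
Section Mat4.
Variable R : realType.
Variable p : nat.
Implicit Types (U M N K Z X Y S T : 'M[R]_p) (d e : 'rV[R]_p) (x : 'cV[R]_p).

Lemma ln_prod (f : 'I_p -> R) : (forall i, 0 < f i) ->
  ln (\prod_i f i) = \sum_i ln (f i).
Proof.
move=> f0.
have : 0 < \prod_i f i /\ ln (\prod_i f i) = \sum_i ln (f i).
  apply: (big_rec2 (fun a b => 0 < a /\ ln a = b)); first by rewrite ln1.
  move=> i a b _ [a0 <-]; split; first by rewrite mulr_gt0.
  by rewrite lnM // posrE.
by case.
Qed.

Lemma ln_le_trace M : pd M -> ln (\det M) <= \tr M - p%:R.
Proof.
move=> pM; have [U [d [oU eM]]] := spectral_sym pM.1.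
have d0 := pd_eig oU eM pM.
rewrite eM det_sp // tr_sp // ln_prod //.
have -> : p%:R = \sum_(i < p) (1 : R) by rewrite sumr_const card_ord.
rewrite -sumrB; apply: ler_sum => i _.
have := @le_ln1Dx R (d 0 i - 1); rewrite [1 + _]addrC subrK; apply.
by have := d0 i; lra.
Qed.

Lemma unit_invmx_sym S : S^T = S -> (invmx S)^T = invmx S.
Proof. by move=> sS; rewrite trmx_inv sS. Qed.

Lemma invmx_sq S : S \in unitmx -> invmx (S *m S) = invmx S *m invmx S.
Proof.
move=> uS; have uSS : S *m S \in unitmx by rewrite unitmx_mul uS.
have h : (S *m S) *m (invmx S *m invmx S) = 1%:M.
  by rewrite mulmxA (mulmxK uS) (mulmxV uS).
by rewrite -[LHS]mulmx1 -h mulmxA (mulVmx uSS) mul1mx.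
Qed.

Lemma logdet_concave M M0 : pd M -> pd M0 ->
  logdet M <= logdet M0 + \tr (invmx M0 *m (M - M0)).
Proof.
move=> pM pM0; have [pS SS] := msqrt_spec pM0.
set S := msqrt M0 in pS SS *.
have uS := pd_unit pS.
set T := invmx S.
have sT : T^T = T by apply: unit_invmx_sym; exact: pS.1.
have uT : T \in unitmx by rewrite unitmx_inv.
set W := T *m M *m T.
have pW : pd W.
  split; first by rewrite /sym_mx /W !trmx_mul sT pM.1 mulmxA.
  move=> x x0; have : qform W x = qform M (T *m x).
    by rewrite /qform /W trmx_mul sT !mulmxA.
  move=> ->; apply: pM.2; apply: contra x0 => /eqP Tx.
  by rewrite -[x]mul1mx -(mulVmx uT) -mulmxA Tx mulmx0.
have eM : M = S *m W *m S.
  by rewrite /W !mulmxA (mulmxV uS) mul1mx -mulmxA (mulVmx uS) mulmx1.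
have trW : \tr W = \tr (invmx M0 *m M).
  rewrite -SS invmx_sq // /W mxtrace_mulC mulmxA.
  by rewrite mxtrace_mulC !mulmxA.
clearbody W.
have dS := pd_det_gt0 pS.
have dW := pd_det_gt0 pW.
have -> : logdet M = logdet M0 + ln (\det W).
  have key : forall A B : 'M[R]_p, \det (A *m B *m A) = \det A * \det A * \det B.
    by move=> A B; rewrite !det_mulmx; ring.
  rewrite /logdet {1}eM key -SS det_mulmx -lnM ?posrE ?mulr_gt0 //.
rewrite lerD2l; apply: (le_trans (ln_le_trace pW)).
by rewrite mulmxBr linearB /= (mulVmx (pd_unit pM0)) mxtrace1 trW.
Qed.

End Mat4.
Section Proj.
Variable R : realType.
Variable p : nat.
Implicit Types (U M N K Z X Y P Q H E : 'M[R]_p) (d e : 'rV[R]_p) (x : 'cV[R]_p).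

Lemma ip_orth U M : orth U -> ip (U *m M *m U^T) (U *m M *m U^T) = ip M M.
Proof.
move=> oU; rewrite !ip_tr !trmx_mul trmxK.
rewrite -!mulmxA [U^T *m (U *m _)]mulmxA (orthT oU) mul1mx.
by rewrite mxtrace_mulC -!mulmxA (orthT oU) mulmx1.
Qed.

Lemma UQU_diag U Q i : (U *m Q *m U^T) i i = qform Q (row i U)^T.
Proof.
rewrite /qform trmxK -row_mul !mxE; apply: eq_bigr => l _; by rewrite !mxE.
Qed.

Lemma ip_ge_diag N : \sum_i N i i ^+ 2 <= ip N N.
Proof.
apply: ler_sum => i _; rewrite (bigD1 i) //= -expr2 lerDl.
by apply: sumr_ge0 => j _; rewrite -expr2 sqr_ge0.
Qed.

Lemma ip_diag (a : 'rV[R]_p) : ip (diag_mx a) (diag_mx a) = \sum_i a 0 i ^+ 2.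
Proof.
apply: eq_bigr => i _; rewrite (bigD1 i) //= big1 ?addr0.
  by rewrite !mxE eqxx /= mulr1n expr2.
by move=> j ji; rewrite !mxE eq_sym (negPf ji) mulr0n mulr0.
Qed.

Lemma ip_ge0 M : 0 <= ip M M.
Proof. by apply: sumr_ge0 => i _; apply: sumr_ge0 => j _; rewrite -expr2 sqr_ge0. Qed.

Lemma frob2_orth U d Q : orth U ->
  frob2 (sp U d) Q = ip (diag_mx d - U *m Q *m U^T) (diag_mx d - U *m Q *m U^T).
Proof.
move=> oU; rewrite frob2_ip -(ip_orth _ oU).
suff -> : U *m (sp U d - Q) *m U^T = diag_mx d - U *m Q *m U^T by [].
rewrite mulmxBr mulmxBl /sp !mulmxA oU mul1mx -!mulmxA oU mulmx1.
by rewrite !mulmxA.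
Qed.

Lemma proj_exists X : sym_mx X ->
  exists P, psd P /\ forall Q, psd Q -> frob2 X P <= frob2 X Q.
Proof.
move=> sX; have [U [d [oU eX]]] := spectral_sym sX.
pose dp := \row_i Num.max (d 0 i) 0.
exists (sp U dp); split.
  by apply: sp_psd => // i; rewrite mxE le_max lexx orbT.
move=> Q pQ; rewrite eX !frob2_orth //.
have -> : diag_mx d - U *m sp U dp *m U^T = diag_mx (d - dp).
  rewrite /sp !mulmxA oU mul1mx -!mulmxA oU mulmx1.
  by rewrite linearB.
rewrite ip_diag; apply: le_trans (ip_ge_diag _); apply: ler_sum => i _.
have e : (diag_mx d - U *m Q *m U^T) i i = d 0 i - qform Q (row i U)^T.
  by rewrite -UQU_diag !mxE eqxx mulr1n.
rewrite e !mxE.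
have q0 := pQ.2 (row i U)^T.
set q := qform Q _ in q0 *; set a := d 0 i.
case: (leP 0 a) => a0.
  by rewrite subrr expr0n /= sqr_ge0.
by rewrite subr0; nra.
Qed.

Lemma proj_spec X : sym_mx X ->
  psd (proj_psd X) /\ forall Q, psd Q -> frob2 X (proj_psd X) <= frob2 X Q.
Proof. by move=> sX; rewrite /proj_psd; apply: (xgetPex 0 (proj_exists sX)). Qed.

Lemma ip_expand E H t :
  ip (E + t *: H) (E + t *: H) = ip E E + 2 * t * ip E H + t ^+ 2 * ip H H.
Proof.
rewrite ipDl ipZl !(ipC _ (E + t *: H)) !ipDl !ipZl (ipC H E); ring.
Qed.

Lemma scal_le0 (a b : R) : 0 <= b ->
  (forall t, 0 < t -> t < 1 -> 2 * t * a <= t ^+ 2 * b) -> a <= 0.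
Proof.
move=> b0 h; rewrite leNgt; apply/negP => a0.
have c0 : 0 < a + b + 1 by lra.
set t := a / (a + b + 1).
have ht : t * (a + b + 1) = a by rewrite /t mulrVK // unitfE gt_eqF.
have t0 : 0 < t by rewrite divr_gt0.
have t1 : t < 1 by rewrite ltr_pdivrMr // mul1r; lra.
have := h t t0 t1 => H.
have H' : 2 * a <= t * b.
  rewrite -(ler_pM2l t0).
  have -> : t * (2 * a) = 2 * t * a by ring.
  by have -> : t * (t * b) = t ^+ 2 * b by ring.
have H'' : 2 * a * (a + b + 1) <= t * b * (a + b + 1) by rewrite ler_pM2r.
have : t * b * (a + b + 1) = a * b by rewrite mulrAC ht.
nra.
Qed.

Lemma psd_scale a P : 0 <= a -> psd P -> psd (a *: P).
Proof.
move=> a0 [sP pP]; split; first by rewrite /sym_mx linearZ /= sP.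
move=> x; rewrite /qform -scalemxAr -scalemxAl mxE; exact: (mulr_ge0 a0 (pP x)).
Qed.

Lemma psd_add P Q : psd P -> psd Q -> psd (P + Q).
Proof.
move=> [sP pP] [sQ pQ]; split; first by rewrite /sym_mx linearD /= sP sQ.
move=> x; rewrite /qform mulmxDr mulmxDl mxE; exact: (addr_ge0 (pP x) (pQ x)).
Qed.

Lemma psd_rank1 x : psd (x *m x^T).
Proof.
split; first by rewrite /sym_mx trmx_mul trmxK.
move=> y; rewrite /qform.
have -> : y^T *m (x *m x^T) *m y = (y^T *m x) *m (y^T *m x)^T.
  by rewrite trmx_mul trmxK !mulmxA.
by rewrite mxE big_ord1 [X in _ * X]mxE -expr2 sqr_ge0.
Qed.

Lemma proj_foc X P : sym_mx X -> psd P ->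
  (forall Q, psd Q -> frob2 X P <= frob2 X Q) ->
  psd (P - X) /\ \tr ((P - X) *m P) = 0.
Proof.
move=> sX pP hP; set E := X - P.
have fr t Q : X - (P + t *: Q) = E + (- t) *: Q.
  by apply/matrixP => i j; rewrite /E !mxE; ring.
have ipEH H : psd H -> ip E H <= 0.
  move=> pH; apply: (scal_le0 (ip_ge0 H)) => t t0 _.
  have := hP _ (psd_add pP (psd_scale (ltW t0) pH)).
  rewrite !frob2_ip fr ip_expand -/E; nra.
have ipEP : 0 <= ip E P.
  rewrite -oppr_le0; apply: (scal_le0 (ip_ge0 P)) => t t0 t1.
  have := hP ((1 - t) *: P) (psd_scale _ pP); rewrite subr_ge0 ltW // !frob2_ip.
  have -> : X - (1 - t) *: P = E + t *: P.
    by apply/matrixP => i j; rewrite /E !mxE; ring.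
  rewrite ip_expand; nra.
have EP : ip E P = 0 by apply/eqP; rewrite eq_le ipEH.
have PXE : P - X = - E by rewrite /E opprB.
have sPX : sym_mx (P - X) by rewrite /sym_mx linearB /= pP.1 sX.
split.
  split => // x; rewrite -ip_qform PXE ipNl oppr_ge0; apply: ipEH; exact: psd_rank1.
by rewrite -{1}sPX -ip_tr PXE ipNl EP oppr0.
Qed.
End Proj.
Section Help.
Variable R : realType.
Variable p : nat.
Implicit Types (U M N K Z X Y P Q H E S T : 'M[R]_p) (d e : 'rV[R]_p) (x : 'cV[R]_p).

Lemma qformD M N x : qform (M + N) x = qform M x + qform N x.
Proof. by rewrite /qform mulmxDr mulmxDl mxE. Qed.

Lemma qformZ a M x : qform (a *: M) x = a * qform M x.
Proof. by rewrite /qform -scalemxAr -scalemxAl mxE. Qed.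

Lemma qformN M x : qform (- M) x = - qform M x.
Proof. by rewrite -scaleN1r qformZ mulN1r. Qed.

Lemma qformB M N x : qform (M - N) x = qform M x - qform N x.
Proof. by rewrite qformD qformN. Qed.

Lemma qform0 M : qform M 0 = 0.
Proof. by rewrite /qform mulmx0 mxE. Qed.

Lemma qform_cong S M x : S^T = S -> qform (S *m M *m S) x = qform M (S *m x).
Proof. by move=> sS; rewrite /qform trmx_mul sS !mulmxA. Qed.

Lemma sym_cong S M : S^T = S -> sym_mx M -> sym_mx (S *m M *m S).
Proof. by move=> sS sM; rewrite /sym_mx !trmx_mul sS sM mulmxA. Qed.

Lemma cong_pd S M : S^T = S -> S \in unitmx -> pd M -> pd (S *m M *m S).
Proof.
move=> sS uS [sM pM]; split; first exact: sym_cong.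
move=> x x0; rewrite qform_cong //; apply: pM; apply: contra x0 => /eqP Sx.
by rewrite -[x]mul1mx -(mulVmx uS) -mulmxA Sx mulmx0.
Qed.

Lemma cong_psd S M : S^T = S -> psd M -> psd (S *m M *m S).
Proof.
move=> sS [sM pM]; split; first exact: sym_cong.
by move=> x; rewrite qform_cong.
Qed.

Lemma pd_psd M : pd M -> psd M.
Proof.
move=> [sM pM]; split => // x; have [->|x0] := eqVneq x 0; first by rewrite qform0.
exact: ltW (pM x x0).
Qed.

Lemma pd_add_psd M N : pd M -> psd N -> pd (M + N).
Proof.
move=> [sM pM] [sN pN]; split; first by rewrite /sym_mx linearD /= sM sN.
by move=> x x0; rewrite qformD; have := pM x x0; have := pN x; lra.
Qed.

Lemma pd_scale a M : 0 < a -> pd M -> pd (a *: M).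
Proof.
move=> a0 [sM pM]; split; first by rewrite /sym_mx linearZ /= sM.
by move=> x x0; rewrite qformZ mulr_gt0 // pM.
Qed.

Lemma psd_gram M : psd (M^T *m M).
Proof.
split; first by rewrite /sym_mx trmx_mul trmxK.
move=> x; rewrite /qform.
have -> : x^T *m (M^T *m M) *m x = (M *m x)^T *m (M *m x) by rewrite trmx_mul !mulmxA.
by rewrite mxE; apply: sumr_ge0 => j _; rewrite mxE -expr2 sqr_ge0.
Qed.

Lemma sp_lin U e a b : orth U ->
  sp U (\row_i (a + b * e 0 i)) = a *: 1%:M + b *: sp U e.
Proof.
move=> oU; rewrite /sp.
have -> : diag_mx (\row_i (a + b * e 0 i)) = a *: 1%:M + b *: diag_mx e.
  apply/matrixP => i j; rewrite !mxE; case: eqP => _ /=.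
    by rewrite !mulr1n mulr1.
  by rewrite !mulr0n !mulr0 addr0.
rewrite (mulmxDr U^T) mulmxDl -!scalemxAr -!scalemxAl mulmx1 orthT //.
Qed.

Lemma sp_eigvec U e i : orth U -> sp U e *m (row i U)^T = e 0 i *: (row i U)^T.
Proof.
move=> oU; rewrite /sp -mulmxA U_rowT // -mulmxA.
have -> : diag_mx e *m (row i 1%:M)^T = e 0 i *: (row i 1%:M)^T.
  apply/matrixP => j k; rewrite mul_diag_mx !mxE.
  have [->|ij] := eqVneq i j; first by [].
  by rewrite /= mulr0n !mulr0.
rewrite linearZ /=; congr (_ *: _).
by rewrite -trmx_mul -row_mul mul1mx.
Qed.

Lemma qform_eigvec M u a : M *m u = a *: u -> (u^T *m u) 0 0 = 1 -> qform M u = a.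
Proof. by move=> Mu uu; rewrite /qform -mulmxA Mu -scalemxAr mxE uu mulr1. Qed.

Lemma row_norm1 U i : orth U -> ((row i U)^T^T *m (row i U)^T) 0 0 = 1.
Proof.
move=> oU; rewrite trmxK dotrE.
have /matrixP/(_ i i) := oU.
rewrite !mxE eqxx /= mulr1n => <-; apply: eq_bigr => j _; by rewrite !mxE.
Qed.

End Help.
Section Help2.
Variable R : realType.
Variable p : nat.
Implicit Types (U M N K Z X Y P Q H E S T : 'M[R]_p) (d e : 'rV[R]_p) (x : 'cV[R]_p).

Lemma cong_lin S M N a b :
  S *m (a *: M + b *: N) *m S = a *: (S *m M *m S) + b *: (S *m N *m S).
Proof. by rewrite (mulmxDr S) mulmxDl -!scalemxAr -!scalemxAl. Qed.

Lemma invmx_cong S M : S \in unitmx -> M \in unitmx ->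
  invmx (S *m M *m S) = invmx S *m invmx M *m invmx S.
Proof.
move=> uS uM; have uSMS : S *m M *m S \in unitmx by rewrite !unitmx_mul uS uM.
have h : (S *m M *m S) *m (invmx S *m invmx M *m invmx S) = 1%:M.
  by rewrite !mulmxA (mulmxK uS) (mulmxK uM) (mulmxV uS).
by rewrite -[LHS]mulmx1 -h mulmxA (mulVmx uSMS) mul1mx.
Qed.

Lemma qform_ker K x : K *m x = 0 -> qform K x = 0.
Proof. by move=> Kx; rewrite /qform -mulmxA Kx mulmx0 mxE. Qed.

End Help2.
Section Help3.
Variable R : realType.
Variable p : nat.
Lemma trcong (T Mi D : 'M[R]_p) : \tr (T *m Mi *m T *m D) = \tr (Mi *m (T *m D *m T)).
Proof. by rewrite -!mulmxA mxtrace_mulC !mulmxA. Qed.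
End Help3.
Theorem proposition3p1 (R : realType) (p : nat) (hp : (1 <= p)%N)
  (ki kj : R) (hki : 0 < ki) (hkj : 0 < kj)
  (A B : 'M[R]_p) (hA : sym_mx A) (hB : sym_mx B)
  (hfeas : exists Y : 'M[R]_p, feasible ki kj A B Y) :
  let Ystar := (ki * kj / (ki + kj)) *:
      (msqrt A *m proj_psd (1%:M - minvsqrt A *m B *m minvsqrt A) *m msqrt A) in
  pd A /\ feasible ki kj A B Ystar /\
  (forall Y : 'M[R]_p, feasible ki kj A B Y ->
     objective ki kj A B Y <= objective ki kj A B Ystar).
Proof.
move=> Ystar; rewrite {}/Ystar.
have [Y0 [pY0 [hB0 hA0]]] := hfeas.
rewrite /loewner_lt opprK in hB0 hA0.
have pA : pd A.
  split => // x x0; have := hA0.2 x x0; rewrite qformB qformZ => h.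
  have := pY0.2 x => h2.
  by rewrite -(pmulr_rgt0 _ hki); lra.
split; first exact: pA.
rewrite /minvsqrt.
have [pS SS] := msqrt_spec pA.
set S := msqrt A in pS SS *.
have uS := pd_unit pS.
have sS : S^T = S := pS.1.
set T := invmx S.
have sT : T^T = T := unit_invmx_sym sS.
have TS : T *m S = 1%:M := mulVmx uS.
have ST : S *m T = 1%:M := mulmxV uS.
have uT : T \in unitmx by rewrite unitmx_inv.
set X := 1%:M - T *m B *m T.
have sX : sym_mx X.
  by rewrite /sym_mx /X linearB /= trmx1 !trmx_mul sT hB mulmxA.
have [pP minP] := proj_spec sX.
set P := proj_psd X in pP minP *.
have [pK trKP] := proj_foc sX pP minP.
set K := P - X in pK trKP.
have KP : K *m P = 0 := tr_psd_eq0 pK pP trKP.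
have PK : P *m K = 0.
  by have := congr1 trmx KP; rewrite trmx_mul pP.1 pK.1 trmx0.
have TBT : T *m B *m T = 1%:M - P + K.
  by rewrite /K /X; apply/matrixP => i j; rewrite !mxE; ring.
have BE : B = S *m (T *m B *m T) *m S.
  by rewrite !mulmxA ST mul1mx -mulmxA TS mulmx1.
have AE : A = S *m 1%:M *m S by rewrite mulmx1 SS.
have [U [e [oU eP]]] := spectral_sym pP.1.
have e0 := psd_eig oU eP pP.
have kk : 0 < ki + kj by lra.
(* feasibility of Y0 gives a bound on the spectrum of P *)
have pG0 : pd (ki *: 1%:M + kj *: (T *m B *m T)).
  have h : pd (ki *: A + kj *: B).
    have -> : ki *: A + kj *: B = (ki *: A - Y0) + (Y0 + kj *: B).
      by rewrite addrA subrK.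
    by apply: pd_add_psd => //; exact: pd_psd.
  have := cong_pd sT uT h.
  rewrite [in X in pd X -> _]AE [in X in pd X -> _]BE -cong_lin.
  by rewrite !mulmxA TS mul1mx -!mulmxA ST mulmx1 mulmxA.
have key i : kj * e 0 i < ki + kj.
  have := e0 i; rewrite le_eqVlt => /orP[/eqP <-|epos]; first by rewrite mulr0.
  set u := (row i U)^T.
  have Pu : P *m u = e 0 i *: u by rewrite eP sp_eigvec.
  have Ku : K *m u = 0.
    have : K *m (P *m u) = 0 by rewrite mulmxA KP mul0mx.
    rewrite Pu -scalemxAr => /eqP; rewrite scaler_eq0 (gt_eqF epos) /= => /eqP.
    done.
  have uu := row_norm1 i oU.
  have := pG0.2 u (row_neq0 i oU).
  rewrite TBT qformD !qformZ qformD qformB (qform_ker Ku).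
  rewrite (qform_eigvec Pu uu) (@qform_eigvec _ _ _ _ 1 _ uu) ?mul1mx ?scale1r //.
  lra.
set a := kj / (ki + kj).
set c := ki * kj / (ki + kj).
have kk0 : ki + kj != 0 by rewrite gt_eqF.
have b1 i : 0 < 1 + (- a) * e 0 i.
  have -> : 1 + (- a) * e 0 i = (ki + kj - kj * e 0 i) / (ki + kj) by rewrite /a; field.
  by rewrite divr_gt0 // subr_gt0 key.
have b2 i : 0 < ki + (- c) * e 0 i.
  have -> : ki + (- c) * e 0 i = ki * ((ki + kj - kj * e 0 i) / (ki + kj)) by rewrite /c; field.
  by rewrite mulr_gt0 // divr_gt0 // subr_gt0 key.
have b3 i : 0 < kj + (c - kj) * e 0 i.
  have -> : kj + (c - kj) * e 0 i = kj * ((ki + kj - kj * e 0 i) / (ki + kj)) by rewrite /c; field.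
  by rewrite mulr_gt0 // divr_gt0 // subr_gt0 key.
have spl (al be : R) (hb : forall i, 0 < al + be * e 0 i) : pd (al *: 1%:M + be *: P).
  by rewrite eP -sp_lin //; apply: sp_pd => // i; rewrite mxE.
set M1 := 1%:M - a *: P.
have pM1 : pd M1.
  have := spl 1 (- a) b1; by rewrite scale1r scaleNr.
have pN1 : pd (M1 + K) by apply: pd_add_psd.
have c0 : 0 <= c by rewrite /c divr_ge0 // ?mulr_ge0 // ltW.
have feasS : feasible ki kj A B (c *: (S *m P *m S)).
  split; first by apply: psd_scale => //; exact: cong_psd.
  rewrite /loewner_lt opprK; split.
    have -> : c *: (S *m P *m S) + kj *: B =
        S *m ((kj *: 1%:M + (c - kj) *: P) + kj *: K) *m S.
      rewrite [in LHS]BE TBT.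
      have -> : (kj *: 1%:M + (c - kj) *: P) + kj *: K = c *: P + kj *: (1%:M - P + K).
        by apply/matrixP => i j; rewrite !mxE; ring.
      by rewrite cong_lin.
    apply: cong_pd => //; apply: pd_add_psd; first exact: spl.
    by apply: psd_scale => //; exact: ltW.
  have -> : ki *: A - c *: (S *m P *m S) = S *m (ki *: 1%:M + (- c) *: P) *m S.
    by rewrite cong_lin [in LHS]AE scaleNr.
  by apply: cong_pd => //; exact: spl.
split; first exact: feasS.
move=> Y fY.
have pdf Z : feasible ki kj A B Z -> pd (A - ki^-1 *: Z) /\ pd (B + kj^-1 *: Z).
  move=> [_ [h1 h2]]; rewrite /loewner_lt opprK in h1 h2; split.
    have -> : A - ki^-1 *: Z = ki^-1 *: (ki *: A - Z).
      by rewrite scalerBr scalerA mulVf ?gt_eqF // scale1r.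
    by apply: pd_scale; rewrite ?invr_gt0.
  have -> : B + kj^-1 *: Z = kj^-1 *: (Z + kj *: B).
    by rewrite scalerDr scalerA mulVf ?gt_eqF // scale1r addrC.
  by apply: pd_scale; rewrite ?invr_gt0.
have [pMY pNY] := pdf _ fY.
have [pM0 pN0] := pdf _ feasS.
set Ys := c *: (S *m P *m S) in pM0 pN0 *.
have h1 := logdet_concave pMY pM0.
have h2 := logdet_concave pNY pN0.
suff hs : ki * \tr (invmx (A - ki^-1 *: Ys) *m ((A - ki^-1 *: Y) - (A - ki^-1 *: Ys))) +
    kj * \tr (invmx (B + kj^-1 *: Ys) *m ((B + kj^-1 *: Y) - (B + kj^-1 *: Ys))) <= 0.
  rewrite /objective.
  have := ler_wpM2l (ltW hki) h1; have := ler_wpM2l (ltW hkj) h2.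
  rewrite !mulrDr; lra.
have ki0 : ki != 0 by rewrite gt_eqF.
have kj0 : kj != 0 by rewrite gt_eqF.
have e1 : (A - ki^-1 *: Y) - (A - ki^-1 *: Ys) = ki^-1 *: (Ys - Y).
  by apply/matrixP => i j; rewrite !mxE; ring.
have e2 : (B + kj^-1 *: Y) - (B + kj^-1 *: Ys) = kj^-1 *: (Y - Ys).
  by apply/matrixP => i j; rewrite !mxE; ring.
set N1 := M1 + K in pN1 *.
have uM1 := pd_unit pM1.
have uN1 := pd_unit pN1.
have M0E : A - ki^-1 *: Ys = S *m M1 *m S.
  rewrite /M1 (_ : 1%:M - a *: P = 1 *: 1%:M + (- a) *: P); last first.
    by rewrite scale1r scaleNr.
  rewrite cong_lin mulmx1 SS.
  rewrite scale1r scaleNr; congr (_ - _).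
  rewrite /Ys scalerA; congr (_ *: _); rewrite /a /c; field.
  by rewrite kk0 ki0.
have N0E : B + kj^-1 *: Ys = S *m N1 *m S.
  have -> : N1 = 1 *: (T *m B *m T) + (kj^-1 * c) *: P.
    rewrite /N1 /M1 TBT; apply/matrixP => i j; rewrite !mxE /a /c; field.
    by rewrite ?kk0 ?kj0.
  by rewrite cong_lin -BE /Ys scalerA scale1r.
rewrite e1 e2 -!scalemxAr !mxtraceZ !mulrA mulfV // mulfV // !mul1r.
rewrite M0E N0E !invmx_cong // -/T !trcong.
set M1i := invmx M1; set N1i := invmx N1; set Z := T *m Y *m T.
have TYsT : T *m Ys *m T = c *: P.
  rewrite /Ys -scalemxAr -scalemxAl; congr (_ *: _).
  by rewrite !mulmxA TS mul1mx -mulmxA ST mulmx1.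
have -> : T *m (Ys - Y) *m T = - (Z - c *: P).
  by rewrite mulmxBr mulmxBl TYsT opprB.
have -> : T *m (Y - Ys) *m T = Z - c *: P.
  by rewrite mulmxBr mulmxBl TYsT.
have KM1 : K *m M1 = K.
  by rewrite /M1 mulmxBr mulmx1 -scalemxAr KP scaler0 subr0.
have KM1i : K *m M1i = K by rewrite -{1}KM1 -mulmxA (mulmxV uM1) mulmx1.
have Ndiff : N1i - M1i = - (N1i *m K).
  have -> : N1i - M1i = N1i *m (M1 - N1) *m M1i.
    by rewrite mulmxBr mulmxBl (mulmxK uM1) (mulVmx uN1) mul1mx.
  have -> : M1 - N1 = - K by rewrite /N1 opprD addrA subrr sub0r.
  by rewrite mulmxN mulNmx -mulmxA KM1i.
have KN1 : K *m N1 = K + K *m K by rewrite /N1 mulmxDr KM1.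
have LamE : N1i *m K = N1i *m (K + K *m K) *m N1i.
  by rewrite -KN1 mulmxA (mulmxK uN1).
have pLam : psd (N1i *m K).
  rewrite LamE; apply: cong_psd; first exact: (unit_invmx_sym pN1.1).
  have -> : K *m K = K^T *m K by rewrite pK.1.
  by apply: psd_add => //; exact: psd_gram.
have LP : N1i *m K *m P = 0 by rewrite -mulmxA KP mulmx0.
have pZ : psd Z by apply: cong_psd => //; exact: fY.1.
rewrite mulmxN linearN /= addrC -linearB /= -mulmxBl Ndiff mulNmx linearN /=.
rewrite oppr_le0 mulmxBr -scalemxAr LP scaler0 subr0.
exact: tr_psd_ge0.
Qed.
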